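(* Let $\lambda$ be a positive integer, $k,\psi_0\in\mathbb{R}$, $F(\psi)=\frac{k}{\sin^2(\lambda\psi+\psi_0)}$ and $G(\psi)=\cos(\lambda\psi+\psi_0)$. Then for every $\nu\in\mathbb{N}$ the function $$\mathcal{X}_L^{\,\nu}\left(p_r+\frac{1}{\lambda r}\mathcal{X}_L\right)^\lambda G(\psi)$$ is a constant of motion of $H=\frac12p_r^2+\frac{1}{r^2}\left(\frac12p_\psi^2+F(\psi)\right)$.
   Context: Phase space coordinates are $(r,\psi,p_r,p_\psi)$ with $r>0$ and canonical Poisson bracket; dots denote derivatives in $\psi$. $L=\frac12p_\psi^2+F(\psi)$ and $\mathcal{X}_L=p_\psi\frac{\partial}{\partial\psi}-\dot F\frac{\partial}{\partial p_\psi}$ is its Hamiltonian vector field, viewed as a differential operator; $p_r$ and $\frac{1}{\lambda r}$ act by multiplication. A constant of motion is a function with vanishing Poisson bracket with $H$. *)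

(* Defs.v *)
From Stdlib Require Import Reals ClassicalEpsilon.
Open Scope R_scope.

(* The derivative of f at x: the l with derivable_pt_lim f x l if it exists
   (it is unique), and 0 otherwise. *)
Definition deriv (f : R -> R) (x : R) : R :=
  match excluded_middle_informative (exists l, derivable_pt_lim f x l) with
  | left H => proj1_sig (constructive_indefinite_description _ H)
  | right _ => 0
  end.

(* Phase-space functions of (r, psi, p_r, p_psi). *)
Definition PFun := R -> R -> R -> R -> R.

Definition d_r (f : PFun) : PFun :=
  fun r psi pr pp => deriv (fun x => f x psi pr pp) r.
Definition d_psi (f : PFun) : PFun :=
  fun r psi pr pp => deriv (fun x => f r x pr pp) psi.
Definition d_pr (f : PFun) : PFun :=
  fun r psi pr pp => deriv (fun x => f r psi x pp) pr.
Definition d_ppsi (f : PFun) : PFun :=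
  fun r psi pr pp => deriv (fun x => f r psi pr x) pp.

Definition poisson (f g : PFun) : PFun :=
  fun r psi pr pp =>
    d_r f r psi pr pp * d_pr g r psi pr pp - d_pr f r psi pr pp * d_r g r psi pr pp
  + d_psi f r psi pr pp * d_ppsi g r psi pr pp - d_ppsi f r psi pr pp * d_psi g r psi pr pp.

Definition XL (F : R -> R) (f : PFun) : PFun :=
  fun r psi pr pp => pp * d_psi f r psi pr pp - deriv F psi * d_ppsi f r psi pr pp.

Definition raiseOp (lam : nat) (F : R -> R) (f : PFun) : PFun :=
  fun r psi pr pp => pr * f r psi pr pp + / (INR lam * r) * XL F f r psi pr pp.

Definition Ham (F : R -> R) : PFun :=
  fun r psi pr pp => pr ^ 2 / 2 + / r ^ 2 * (pp ^ 2 / 2 + F psi).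

Definition constant_of_motion (F : R -> R) (f : PFun) (domain : R -> R -> Prop) : Prop :=
  forall r psi pr pp, domain r psi -> poisson f (Ham F) r psi pr pp = 0.

(* Main.v *)
Require Import Defs.
From Stdlib Require Import Reals Lra ClassicalEpsilon Ranalysis2 Ranalysis3.
Open Scope R_scope.

Lemma deriv_of_lim f x l : derivable_pt_lim f x l -> deriv f x = l.
Proof.
  intro H. unfold deriv.
  destruct (excluded_middle_informative _) as [e|n].
  - destruct (constructive_indefinite_description _ e) as [l' Hl']; simpl.
    eapply uniqueness_limite; eauto.
  - exfalso; apply n; eauto.
Qed.

Lemma lim_local f g x d l : 0 < d -> (forall y, Rabs (y - x) < d -> f y = g y) ->
  derivable_pt_lim f x l -> derivable_pt_lim g x l.
Proof.
  intros Hd Hfg H eps Heps.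
  destruct (H eps Heps) as [dl Hdl].
  assert (Hm : 0 < Rmin dl d) by (apply Rmin_pos; [apply cond_pos|lra]).
  exists (mkposreal _ Hm); simpl; intros h hne hlt.
  rewrite <- (Hfg (x+h)), <- (Hfg x).
  - apply Hdl; auto. eapply Rlt_le_trans; [exact hlt| apply Rmin_l].
  - replace (x-x) with 0 by ring. rewrite Rabs_R0; lra.
  - replace (x+h-x) with h by ring. eapply Rlt_le_trans; [exact hlt| apply Rmin_r].
Qed.

Lemma deriv_local f g x d : 0 < d -> (forall y, Rabs (y - x) < d -> f y = g y) ->
  deriv f x = deriv g x.
Proof.
  intros Hd Hfg.
  assert (Hgf : forall y, Rabs (y - x) < d -> g y = f y) by (intros; symmetry; auto).
  unfold deriv at 1.
  destruct (excluded_middle_informative _) as [e|n].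
  - destruct (constructive_indefinite_description _ e) as [l' Hl']; simpl.
    symmetry; apply deriv_of_lim. eapply lim_local; eauto.
  - unfold deriv. destruct (excluded_middle_informative _) as [e|n']; auto.
    exfalso. destruct e as [l Hl]. apply n. exists l. eapply lim_local; eauto.
Qed.

Lemma dl_ext f g x l l' : (forall y, f y = g y) -> l = l' -> derivable_pt_lim f x l -> derivable_pt_lim g x l'.
Proof. intros H <-. apply lim_local with 1; [lra|auto]. Qed.

Lemma dl_const c x : derivable_pt_lim (fun _ => c) x 0.
Proof. apply derivable_pt_lim_const. Qed.
Lemma dl_id x : derivable_pt_lim (fun y => y) x 1.
Proof. apply derivable_pt_lim_id. Qed.
Lemma dl_plus f g x l1 l2 l : derivable_pt_lim f x l1 -> derivable_pt_lim g x l2 -> l = l1 + l2 ->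
  derivable_pt_lim (fun y => f y + g y) x l.
Proof. intros H1 H2 ->. apply (derivable_pt_lim_plus f g x l1 l2 H1 H2). Qed.
Lemma dl_mult f g x l1 l2 l : derivable_pt_lim f x l1 -> derivable_pt_lim g x l2 -> l = l1 * g x + f x * l2 ->
  derivable_pt_lim (fun y => f y * g y) x l.
Proof. intros H1 H2 ->. apply (derivable_pt_lim_mult f g x l1 l2 H1 H2). Qed.
Lemma dl_comp f g x l1 l2 l : derivable_pt_lim g x l1 -> derivable_pt_lim f (g x) l2 -> l = l2 * l1 ->
  derivable_pt_lim (fun y => f (g y)) x l.
Proof. intros H1 H2 ->. apply (derivable_pt_lim_comp g f x l1 l2 H1 H2). Qed.
Lemma dl_inv f x l1 l : derivable_pt_lim f x l1 -> f x <> 0 -> l = - l1 / (f x)^2 ->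
  derivable_pt_lim (fun y => / f y) x l.
Proof. intros H1 H2 ->.
  generalize (derivable_pt_lim_div (fun _ => 1) f x 0 l1 (dl_const 1 x) H1 H2).
  apply dl_ext. intro y; unfold div_fct; simpl; unfold Rdiv; ring. unfold Rsqr; simpl. field. auto. Qed.
Lemma dl_sin f x l1 l : derivable_pt_lim f x l1 -> l = cos (f x) * l1 ->
  derivable_pt_lim (fun y => sin (f y)) x l.
Proof. intros H ->. eapply dl_comp; [exact H| apply derivable_pt_lim_sin| ring]. Qed.
Lemma dl_cos f x l1 l : derivable_pt_lim f x l1 -> l = - sin (f x) * l1 ->
  derivable_pt_lim (fun y => cos (f y)) x l.
Proof. intros H ->. eapply dl_comp; [exact H| apply derivable_pt_lim_cos| ring]. Qed.

Record Coef := MkC { cv : R->R->R->R; cr : R->R->R->R; cp : R->R->R->R; cl : R->R->R->R }.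

Definition Smooth (c : Coef) := forall r p l, 0 < r ->
  derivable_pt_lim (fun x => cv c x p l) r (cr c r p l) /\
  derivable_pt_lim (fun x => cv c r x l) p (cp c r p l) /\
  derivable_pt_lim (fun x => cv c r p x) l (cl c r p l).

Definition z3 : R->R->R->R := fun _ _ _ => 0.
Definition cconst (k : R) := MkC (fun _ _ _ => k) z3 z3 z3.
Definition cP := MkC (fun _ p _ => p) z3 (fun _ _ _ => 1) z3.
Definition cS := MkC (fun r _ _ => / r) (fun r _ _ => - / (r * r)) z3 z3.
Definition cLv := MkC (fun _ _ l => l) z3 z3 (fun _ _ _ => 1).
Definition cadd (a b : Coef) := MkC (fun r p l => cv a r p l + cv b r p l)
  (fun r p l => cr a r p l + cr b r p l) (fun r p l => cp a r p l + cp b r p l)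
  (fun r p l => cl a r p l + cl b r p l).
Definition cmul (a b : Coef) := MkC (fun r p l => cv a r p l * cv b r p l)
  (fun r p l => cr a r p l * cv b r p l + cv a r p l * cr b r p l)
  (fun r p l => cp a r p l * cv b r p l + cv a r p l * cp b r p l)
  (fun r p l => cl a r p l * cv b r p l + cv a r p l * cl b r p l).

Lemma sm_const k : Smooth (cconst k).
Proof. intros r p l _; simpl; unfold z3; repeat split; apply dl_const. Qed.
Lemma sm_P : Smooth cP.
Proof. intros r p l _; simpl; unfold z3; repeat split; (apply dl_const || apply dl_id). Qed.
Lemma sm_L : Smooth cLv.
Proof. intros r p l _; simpl; unfold z3; repeat split; (apply dl_const || apply dl_id). Qed.
Lemma sm_S : Smooth cS.
Proof. intros r p l Hr; simpl; unfold z3; repeat split; try apply dl_const.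
  eapply dl_inv; [apply dl_id| lra| field; lra]. Qed.
Lemma sm_add a b : Smooth a -> Smooth b -> Smooth (cadd a b).
Proof. intros Ha Hb r p l Hr; destruct (Ha r p l Hr) as (A1&A2&A3); destruct (Hb r p l Hr) as (B1&B2&B3);
  simpl; repeat split; eapply dl_plus; eauto. Qed.
Lemma sm_mul a b : Smooth a -> Smooth b -> Smooth (cmul a b).
Proof. intros Ha Hb r p l Hr; destruct (Ha r p l Hr) as (A1&A2&A3); destruct (Hb r p l Hr) as (B1&B2&B3);
  simpl; repeat split; eapply dl_mult; eauto. Qed.

Definition Pair := (Coef * Coef)%type.
Definition SmoothP (x : Pair) := Smooth (fst x) /\ Smooth (snd x).

Definition Aop (lamR : R) (x : Pair) : Pair :=
  (cadd (cmul cP (fst x)) (cmul (cconst (-2 * lamR)) (cmul cLv (cmul cS (snd x)))),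
   cadd (cmul cP (snd x)) (cmul (cconst (/ lamR)) (cmul cS (fst x)))).
Definition Xop (lamR : R) (x : Pair) : Pair :=
  (cmul (cconst (-2 * lamR ^ 2)) (cmul cLv (snd x)), fst x).

Lemma smA lamR x : SmoothP x -> SmoothP (Aop lamR x).
Proof. intros [H1 H2]; split; simpl;
  repeat (apply sm_add || apply sm_mul || apply sm_P || apply sm_S || apply sm_L || apply sm_const); auto. Qed.
Lemma smX lamR x : SmoothP x -> SmoothP (Xop lamR x).
Proof. intros [H1 H2]; split; simpl;
  repeat (apply sm_add || apply sm_mul || apply sm_P || apply sm_S || apply sm_L || apply sm_const); auto. Qed.

Definition T1 (lamR : R) (x : Pair) r p l :=
  p * cr (fst x) r p l + 2 * l / r ^ 3 * cp (fst x) r p l - 2 * lamR ^ 2 * l * cv (snd x) r p l / r ^ 2.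
Definition T2 (lamR : R) (x : Pair) r p l :=
  p * cr (snd x) r p l + 2 * l / r ^ 3 * cp (snd x) r p l + cv (fst x) r p l / r ^ 2.

Definition e0 : Pair := (cconst 1, cconst 0).

Lemma T_A lamR n : lamR <> 0 -> forall r p l, 0 < r ->
  T1 lamR (Nat.iter n (Aop lamR) e0) r p l = (INR n - lamR) / r^2 * (2 * lamR * l * cv (snd (Nat.iter n (Aop lamR) e0)) r p l) /\
  T2 lamR (Nat.iter n (Aop lamR) e0) r p l = (INR n - lamR) / r^2 * (- cv (fst (Nat.iter n (Aop lamR) e0)) r p l / lamR).
Proof.
  intros Hl. induction n as [|n IH]; intros r p l Hr.
  - unfold T1, T2; simpl; unfold z3; split; field; lra.
  - destruct (IH r p l Hr) as [I1 I2].
    set (x := Nat.iter n (Aop lamR) e0) in *.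
    change (Nat.iter (S n) (Aop lamR) e0) with (Aop lamR x).
    unfold T1, T2 in *. rewrite S_INR. simpl. unfold z3.
    set (a := cv (fst x) r p l) in *. set (b := cv (snd x) r p l) in *.
    set (ar := cr (fst x) r p l) in *. set (br := cr (snd x) r p l) in *.
    set (ap := cp (fst x) r p l) in *. set (bp := cp (snd x) r p l) in *.
    split.
    + apply Rminus_diag_uniq.
      apply Rminus_diag_eq in I1. apply Rminus_diag_eq in I2.
      transitivity (p * (p * ar + 2 * l / r ^ 3 * ap - 2 * lamR ^ 2 * l * b / r ^ 2 -
         (INR n - lamR) / r ^ 2 * (2 * lamR * l * b)) - 2 * lamR * l / r *
         (p * br + 2 * l / r ^ 3 * bp + a / r ^ 2 - (INR n - lamR) / r ^ 2 * (- a / lamR))).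
      * field; lra.
      * rewrite I1, I2; ring.
    + apply Rminus_diag_uniq.
      apply Rminus_diag_eq in I1. apply Rminus_diag_eq in I2.
      transitivity (p * (p * br + 2 * l / r ^ 3 * bp + a / r ^ 2 - (INR n - lamR) / r ^ 2 * (- a / lamR))
        + /(lamR * r) * (p * ar + 2 * l / r ^ 3 * ap - 2 * lamR ^ 2 * l * b / r ^ 2 -
         (INR n - lamR) / r ^ 2 * (2 * lamR * l * b))).
      * field; lra.
      * rewrite I1, I2; ring.
Qed.

Lemma T_X lamR m x : (forall r p l, 0 < r -> T1 lamR x r p l = 0 /\ T2 lamR x r p l = 0) ->
  forall r p l, 0 < r -> T1 lamR (Nat.iter m (Xop lamR) x) r p l = 0 /\ T2 lamR (Nat.iter m (Xop lamR) x) r p l = 0.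
Proof.
  intros H0. induction m as [|m IH]; intros r p l Hr; [auto|].
  destruct (IH r p l Hr) as [I1 I2].
  set (y := Nat.iter m (Xop lamR) x) in *.
  change (Nat.iter (S m) (Xop lamR) x) with (Xop lamR y).
  unfold T1, T2 in *; simpl; unfold z3. split.
  - transitivity (-2 * lamR^2 * l * (p * cr (snd y) r p l + 2 * l / r ^ 3 * cp (snd y) r p l + cv (fst y) r p l / r ^ 2)).
    + field; lra.
    + rewrite I2; ring.
  - transitivity (p * cr (fst y) r p l + 2 * l / r ^ 3 * cp (fst y) r p l - 2 * lamR ^ 2 * l * cv (snd y) r p l / r ^ 2).
    + field; lra.
    + exact I1.
Qed.

Lemma dl_sq f x l1 l : derivable_pt_lim f x l1 -> l = 2 * f x * l1 ->
  derivable_pt_lim (fun y => f y ^ 2) x l.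
Proof. intros H ->. eapply dl_ext with (f := fun y => f y * f y).
  intro; ring. 2: eapply dl_mult; eauto. ring. Qed.

Definition th (lam : nat) psi0 psi := INR lam * psi + psi0.
Definition Fk (lam : nat) k psi0 := fun psi => k / (sin (INR lam * psi + psi0)) ^ 2.
Definition Fd (lam : nat) k psi0 psi := -2 * k * INR lam * cos (th lam psi0 psi) / sin (th lam psi0 psi) ^ 3.
Definition Lf lam k psi0 psi pp := pp ^ 2 / 2 + Fk lam k psi0 psi.
Definition XGv (lam : nat) psi0 psi pp := - INR lam * pp * sin (th lam psi0 psi).
Definition rep lam k psi0 (x : Pair) : PFun := fun r psi pr pp =>
  cv (fst x) r pr (Lf lam k psi0 psi pp) * cos (th lam psi0 psi) +
  cv (snd x) r pr (Lf lam k psi0 psi pp) * XGv lam psi0 psi pp.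
Definition dom (lam : nat) psi0 r psi := 0 < r /\ sin (th lam psi0 psi) <> 0.
Definition Agree lam psi0 (f g : PFun) := forall r psi pr pp, dom lam psi0 r psi -> f r psi pr pp = g r psi pr pp.

Lemma dl_th lam psi0 psi : derivable_pt_lim (th lam psi0) psi (INR lam).
Proof. unfold th. eapply dl_plus with (f := fun y => INR lam * y) (g := fun _ => psi0).
  eapply dl_mult with (f := fun _ => INR lam); [apply dl_const|apply dl_id|reflexivity].
  apply dl_const. ring. Qed.

Lemma F_lim lam k psi0 psi : sin (th lam psi0 psi) <> 0 ->
  derivable_pt_lim (Fk lam k psi0) psi (Fd lam k psi0 psi).
Proof. intro Hs. unfold Fk, Rdiv.
  eapply dl_mult with (f := fun _ => k); [apply dl_const| |].
  eapply dl_inv. eapply dl_sq. eapply dl_sin. apply (dl_th lam psi0 psi).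
  reflexivity. reflexivity. simpl. fold (th lam psi0 psi). intro H; apply Hs.
  apply (Rmult_integral_contrapositive_currified _ _ Hs) in Hs. lra.
  reflexivity. unfold Fd. fold (th lam psi0 psi). field. auto. Qed.

Lemma sin_nbhd lam psi0 psi : sin (th lam psi0 psi) <> 0 ->
  exists d, 0 < d /\ forall y, Rabs (y - psi) < d -> sin (th lam psi0 y) <> 0.
Proof.
  intro Hs.
  assert (Hd : derivable_pt_lim (fun y => sin (th lam psi0 y)) psi (cos (th lam psi0 psi) * INR lam)).
  { eapply dl_sin; [apply dl_th|reflexivity]. }
  destruct (continuous_neq_0 _ _ (derivable_continuous_pt _ _ (exist _ _ Hd)) Hs) as [e He].
  exists e; split; [apply cond_pos|]. intros y Hy.
  replace y with (psi + (y - psi)) by ring. apply He; auto.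
Qed.

Lemma loc_r lam psi0 f g r psi pr pp : Agree lam psi0 f g -> dom lam psi0 r psi ->
  d_r f r psi pr pp = d_r g r psi pr pp.
Proof. intros H [Hr Hs]. unfold d_r. apply deriv_local with r; auto.
  intros y Hy. apply H. split; auto. apply Rabs_def2 in Hy. lra. Qed.
Lemma loc_pr lam psi0 f g r psi pr pp : Agree lam psi0 f g -> dom lam psi0 r psi ->
  d_pr f r psi pr pp = d_pr g r psi pr pp.
Proof. intros H D. unfold d_pr. apply deriv_local with 1; [lra|auto]. Qed.
Lemma loc_pp lam psi0 f g r psi pr pp : Agree lam psi0 f g -> dom lam psi0 r psi ->
  d_ppsi f r psi pr pp = d_ppsi g r psi pr pp.
Proof. intros H D. unfold d_ppsi. apply deriv_local with 1; [lra|auto]. Qed.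
Lemma loc_psi lam psi0 f g r psi pr pp : Agree lam psi0 f g -> dom lam psi0 r psi ->
  d_psi f r psi pr pp = d_psi g r psi pr pp.
Proof. intros H [Hr Hs]. unfold d_psi. destruct (sin_nbhd _ _ _ Hs) as (d&Hd&Hy).
  apply deriv_local with d; auto. intros y Y. apply H. split; auto. Qed.


Lemma rep_r lam k psi0 x r psi pr pp : SmoothP x -> 0 < r ->
  d_r (rep lam k psi0 x) r psi pr pp =
  cr (fst x) r pr (Lf lam k psi0 psi pp) * cos (th lam psi0 psi) +
  cr (snd x) r pr (Lf lam k psi0 psi pp) * XGv lam psi0 psi pp.
Proof. intros [Ha Hb] Hr. unfold d_r, rep. apply deriv_of_lim.
  destruct (Ha r pr (Lf lam k psi0 psi pp) Hr) as (A1&_&_).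
  destruct (Hb r pr (Lf lam k psi0 psi pp) Hr) as (B1&_&_).
  eapply dl_plus; [eapply dl_mult; [exact A1|apply dl_const|reflexivity]
                  |eapply dl_mult; [exact B1|apply dl_const|reflexivity]|ring]. Qed.

Lemma rep_pr lam k psi0 x r psi pr pp : SmoothP x -> 0 < r ->
  d_pr (rep lam k psi0 x) r psi pr pp =
  cp (fst x) r pr (Lf lam k psi0 psi pp) * cos (th lam psi0 psi) +
  cp (snd x) r pr (Lf lam k psi0 psi pp) * XGv lam psi0 psi pp.
Proof. intros [Ha Hb] Hr. unfold d_pr, rep. apply deriv_of_lim.
  destruct (Ha r pr (Lf lam k psi0 psi pp) Hr) as (_&A1&_).
  destruct (Hb r pr (Lf lam k psi0 psi pp) Hr) as (_&B1&_).
  eapply dl_plus; [eapply dl_mult; [exact A1|apply dl_const|reflexivity]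
                  |eapply dl_mult; [exact B1|apply dl_const|reflexivity]|ring]. Qed.

Lemma Lf_pp lam k psi0 psi pp : derivable_pt_lim (fun y => Lf lam k psi0 psi y) pp pp.
Proof. unfold Lf.
  assert (H : derivable_pt_lim (fun y => y ^ 2 * / 2) pp pp).
  { eapply dl_mult; [eapply dl_sq; [apply dl_id|reflexivity]|apply dl_const|field]. }
  eapply dl_plus with (g := fun _ => Fk lam k psi0 psi) (l1 := pp).
  eapply dl_ext; [|reflexivity|exact H]. intro; unfold Rdiv; ring.
  apply dl_const. ring. Qed.

Lemma Lf_psi lam k psi0 psi pp : sin (th lam psi0 psi) <> 0 ->
  derivable_pt_lim (fun y => Lf lam k psi0 y pp) psi (Fd lam k psi0 psi).
Proof. intro Hs. unfold Lf. eapply dl_plus with (f := fun _ => pp ^ 2 / 2).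
  apply dl_const. apply F_lim; auto. ring. Qed.

Lemma rep_pp lam k psi0 x r psi pr pp : SmoothP x -> 0 < r ->
  d_ppsi (rep lam k psi0 x) r psi pr pp =
  cl (fst x) r pr (Lf lam k psi0 psi pp) * pp * cos (th lam psi0 psi) +
  cl (snd x) r pr (Lf lam k psi0 psi pp) * pp * XGv lam psi0 psi pp +
  cv (snd x) r pr (Lf lam k psi0 psi pp) * (- INR lam * sin (th lam psi0 psi)).
Proof. intros [Ha Hb] Hr. unfold d_ppsi, rep. apply deriv_of_lim.
  destruct (Ha r pr (Lf lam k psi0 psi pp) Hr) as (_&_&A1).
  destruct (Hb r pr (Lf lam k psi0 psi pp) Hr) as (_&_&B1).
  eapply dl_plus.
  - eapply dl_mult; [eapply dl_comp; [apply Lf_pp|exact A1|reflexivity]|apply dl_const|reflexivity].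
  - eapply dl_mult; [eapply dl_comp; [apply Lf_pp|exact B1|reflexivity]|unfold XGv|reflexivity].
    eapply dl_mult with (g := fun _ => sin (th lam psi0 psi)); [|apply dl_const|reflexivity].
    eapply dl_mult with (f := fun _ => - INR lam); [apply dl_const|apply dl_id|reflexivity].
  - unfold XGv. ring. Qed.

Lemma rep_psi lam k psi0 x r psi pr pp : SmoothP x -> 0 < r -> sin (th lam psi0 psi) <> 0 ->
  d_psi (rep lam k psi0 x) r psi pr pp =
  cl (fst x) r pr (Lf lam k psi0 psi pp) * Fd lam k psi0 psi * cos (th lam psi0 psi) +
  cv (fst x) r pr (Lf lam k psi0 psi pp) * (- sin (th lam psi0 psi) * INR lam) +
  cl (snd x) r pr (Lf lam k psi0 psi pp) * Fd lam k psi0 psi * XGv lam psi0 psi pp +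
  cv (snd x) r pr (Lf lam k psi0 psi pp) * (- INR lam * pp * (cos (th lam psi0 psi) * INR lam)).
Proof. intros [Ha Hb] Hr Hs. unfold d_psi, rep. apply deriv_of_lim.
  destruct (Ha r pr (Lf lam k psi0 psi pp) Hr) as (_&_&A1).
  destruct (Hb r pr (Lf lam k psi0 psi pp) Hr) as (_&_&B1).
  eapply dl_plus.
  - eapply dl_mult; [eapply dl_comp; [apply Lf_psi; auto|exact A1|reflexivity]
      |eapply dl_cos; [apply dl_th|reflexivity]|reflexivity].
  - eapply dl_mult; [eapply dl_comp; [apply Lf_psi; auto|exact B1|reflexivity]|unfold XGv|reflexivity].
    eapply dl_mult with (f := fun _ => - INR lam * pp); [apply dl_const| |reflexivity].
    eapply dl_sin; [apply dl_th|reflexivity].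
  - unfold XGv. ring. Qed.

Lemma XL_rep lam k psi0 f x : Agree lam psi0 f (rep lam k psi0 x) -> SmoothP x ->
  Agree lam psi0 (XL (Fk lam k psi0) f) (rep lam k psi0 (Xop (INR lam) x)).
Proof.
  intros H Sx r psi pr pp D. pose proof D as [Hr Hs]. unfold XL.
  rewrite (loc_psi _ _ _ _ _ _ _ _ H D), (loc_pp _ _ _ _ _ _ _ _ H D), rep_psi, rep_pp; auto.
  rewrite (deriv_of_lim _ _ _ (F_lim _ _ _ _ Hs)).
  unfold rep; simpl.
  assert (HL : Lf lam k psi0 psi pp = pp ^ 2 / 2 + k / sin (th lam psi0 psi) ^ 2) by reflexivity.
  set (Lv := Lf lam k psi0 psi pp) in *.
  set (a := cv (fst x) r pr Lv). set (b := cv (snd x) r pr Lv).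
  set (al := cl (fst x) r pr Lv). set (bl := cl (snd x) r pr Lv).
  clearbody a b al bl Lv. rewrite HL. unfold Fd, XGv. field. auto.
Qed.

Lemma raise_rep lam k psi0 f x : (0 < lam)%nat -> Agree lam psi0 f (rep lam k psi0 x) -> SmoothP x ->
  Agree lam psi0 (raiseOp lam (Fk lam k psi0) f) (rep lam k psi0 (Aop (INR lam) x)).
Proof.
  intros Hl H Sx r psi pr pp D. pose proof D as [Hr Hs]. unfold raiseOp.
  rewrite (XL_rep _ _ _ _ _ H Sx r psi pr pp D), (H r psi pr pp D).
  assert (HlR : 0 < INR lam) by (apply lt_0_INR; auto).
  unfold rep; simpl.
  set (Lv := Lf lam k psi0 psi pp) in *.
  set (a := cv (fst x) r pr Lv). set (b := cv (snd x) r pr Lv).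
  clearbody a b Lv. field. lra.
Qed.

Lemma final_lemma lam k psi0 f x : Agree lam psi0 f (rep lam k psi0 x) -> SmoothP x ->
  (forall r p l, 0 < r -> T1 (INR lam) x r p l = 0 /\ T2 (INR lam) x r p l = 0) ->
  forall r psi pr pp, dom lam psi0 r psi -> poisson f (Ham (Fk lam k psi0)) r psi pr pp = 0.
Proof.
  intros H Sx HT r psi pr pp D. pose proof D as [Hr Hs]. unfold poisson.
  rewrite (loc_psi _ _ _ _ _ _ _ _ H D), (loc_pp _ _ _ _ _ _ _ _ H D),
    (loc_r _ _ _ _ _ _ _ _ H D), (loc_pr _ _ _ _ _ _ _ _ H D), rep_psi, rep_pp, rep_r, rep_pr; auto.
  assert (HL : Lf lam k psi0 psi pp = pp ^ 2 / 2 + Fk lam k psi0 psi) by reflexivity.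
  assert (E1 : d_r (Ham (Fk lam k psi0)) r psi pr pp = -2 * Lf lam k psi0 psi pp / r ^ 3).
  { unfold d_r, Ham. apply deriv_of_lim. rewrite HL.
    eapply dl_plus with (f := fun _ => pr ^ 2 / 2); [apply dl_const| |].
    eapply dl_mult with (g := fun _ => pp ^ 2 / 2 + Fk lam k psi0 psi); [|apply dl_const|reflexivity].
    eapply dl_inv; [eapply dl_sq; [apply dl_id|reflexivity]| |reflexivity].
    apply pow_nonzero; lra. field; lra. }
  assert (E2 : d_pr (Ham (Fk lam k psi0)) r psi pr pp = pr).
  { unfold d_pr, Ham. apply deriv_of_lim.
    eapply dl_plus with (g := fun _ => / r ^ 2 * (pp ^ 2 / 2 + Fk lam k psi0 psi)); [|apply dl_const|].
    eapply dl_mult with (g := fun _ => / 2); [eapply dl_sq; [apply dl_id|reflexivity]|apply dl_const|reflexivity].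
    field. }
  assert (E3 : d_ppsi (Ham (Fk lam k psi0)) r psi pr pp = / r ^ 2 * pp).
  { unfold d_ppsi, Ham. apply deriv_of_lim.
    eapply dl_plus with (f := fun _ => pr ^ 2 / 2); [apply dl_const| |].
    eapply dl_mult with (f := fun _ => / r ^ 2); [apply dl_const| |reflexivity].
    eapply dl_plus with (g := fun _ => Fk lam k psi0 psi); [|apply dl_const|reflexivity].
    eapply dl_mult with (g := fun _ => / 2); [eapply dl_sq; [apply dl_id|reflexivity]|apply dl_const|reflexivity].
    field; lra. }
  assert (E4 : d_psi (Ham (Fk lam k psi0)) r psi pr pp = / r ^ 2 * Fd lam k psi0 psi).
  { unfold d_psi, Ham. apply deriv_of_lim.
    eapply dl_plus with (f := fun _ => pr ^ 2 / 2); [apply dl_const| |].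
    eapply dl_mult with (f := fun _ => / r ^ 2); [apply dl_const| |reflexivity].
    eapply dl_plus with (f := fun _ => pp ^ 2 / 2); [apply dl_const|apply F_lim; auto|reflexivity].
    ring. }
  rewrite E1, E2, E3, E4.
  destruct (HT r pr (Lf lam k psi0 psi pp) Hr) as [T1z T2z]. unfold T1, T2 in T1z, T2z.
  assert (HL' : Lf lam k psi0 psi pp = pp ^ 2 / 2 + k / sin (th lam psi0 psi) ^ 2) by reflexivity.
  set (Lv := Lf lam k psi0 psi pp) in *.
  set (a := cv (fst x) r pr Lv) in *. set (b := cv (snd x) r pr Lv) in *.
  set (al := cl (fst x) r pr Lv) in *. set (bl := cl (snd x) r pr Lv) in *.
  set (ar := cr (fst x) r pr Lv) in *. set (br := cr (snd x) r pr Lv) in *.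
  set (ap := cp (fst x) r pr Lv) in *. set (bp := cp (snd x) r pr Lv) in *.
  clearbody a b al bl ar br ap bp Lv.
  transitivity (cos (th lam psi0 psi) * (pr * ar + 2 * Lv / r ^ 3 * ap - 2 * INR lam ^ 2 * Lv * b / r ^ 2)
    + XGv lam psi0 psi pp * (pr * br + 2 * Lv / r ^ 3 * bp + a / r ^ 2)).
  - rewrite HL'. unfold XGv, Fd. field. split; lra || auto.
  - rewrite T1z, T2z. ring.
Qed.

Theorem mainTheorem4 (lam : nat) (Hlam : (0 < lam)%nat) (k psi0 : R) (nu : nat) :
  let F := fun psi => k / (sin (INR lam * psi + psi0)) ^ 2 in
  let G : PFun := fun _ psi _ _ => cos (INR lam * psi + psi0) in
  constant_of_motion F
    (Nat.iter nu (XL F) (Nat.iter lam (raiseOp lam F) G))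
    (fun r psi => 0 < r /\ sin (INR lam * psi + psi0) <> 0).
Proof.
  intros F G. unfold constant_of_motion. subst F G.
  change (fun psi => k / sin (INR lam * psi + psi0) ^ 2) with (Fk lam k psi0).
  set (G := fun (_ : R) (psi : R) (_ _ : R) => cos (INR lam * psi + psi0)).
  assert (HlR : 0 < INR lam) by (apply lt_0_INR; auto).
  assert (A0 : Agree lam psi0 G (rep lam k psi0 e0) /\ SmoothP e0).
  { split. intros r psi pr pp _. unfold G, rep, th; simpl. ring.
    split; apply sm_const. }
  assert (A1 : forall n, Agree lam psi0 (Nat.iter n (raiseOp lam (Fk lam k psi0)) G)
                 (rep lam k psi0 (Nat.iter n (Aop (INR lam)) e0)) /\ SmoothP (Nat.iter n (Aop (INR lam)) e0)).
  { induction n as [|n [IH1 IH2]]; [exact A0|]. simpl. split.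
    - apply raise_rep; auto.
    - apply smA; auto. }
  set (y := Nat.iter lam (Aop (INR lam)) e0) in *.
  assert (A2 : forall m, Agree lam psi0 (Nat.iter m (XL (Fk lam k psi0)) (Nat.iter lam (raiseOp lam (Fk lam k psi0)) G))
                 (rep lam k psi0 (Nat.iter m (Xop (INR lam)) y)) /\ SmoothP (Nat.iter m (Xop (INR lam)) y)).
  { induction m as [|m [IH1 IH2]]; [exact (A1 lam)|]. simpl. split.
    - apply XL_rep; auto.
    - apply smX; auto. }
  intros r psi pr pp Hd.
  destruct (A2 nu) as [Ag Sm].
  apply (final_lemma lam k psi0 _ _ Ag Sm); [|exact Hd].
  apply T_X. intros r' p l Hr'.
  destruct (T_A (INR lam) lam (Rgt_not_eq _ _ HlR) r' p l Hr') as [E1 E2].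
  fold y in E1, E2. rewrite E1, E2. split; unfold Rdiv; ring.
Qed.
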